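(* Let $G=(V,E)$ be a finite, simple, connected $K_w$-minor-free graph and let $U\subseteq V$ with $|U|\ge\max(w,4)$. Then every node of $U$ that participates in the maximum number of good quadruples in $U$ (among all nodes of $U$) is $U$-good.
   Context: The interval $I(u,v)$ is the set of nodes on at least one shortest $u$–$v$ path in $G$. A quadruple in $U$ is a set $\{(a,b),(c,d)\}$ of two unordered pairs with $a,b,c,d\in U$ distinct; it is good if $I(a,b)\cap I(c,d)\ne\emptyset$; a node participates in it if it is one of $a,b,c,d$. Let $q(U)$ and $q_{\mathrm{good}}(U)$ be the numbers of quadruples and of good quadruples in $U$, and $\epsilon_U=q_{\mathrm{good}}(U)/(8q(U))$. A node $a\in U$ is $U$-good if there is a subset $U_a\subseteq U$ of size at least $\lceil 4\epsilon_U(|U|-1)\rceil$ such that for every $b\in U_a$ the number of pairs $c,d\in U$ for which $\{(a,b),(c,d)\}$ is a good quadruple is at least $\lceil 4\epsilon_U\binom{|U|-2}{2}\rceil$. *)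

(* Defs.v *)
From HB Require Import structures.
From mathcomp Require Import all_boot all_order all_algebra.
From mathcomp Require Import boolp.
Set Implicit Arguments. Unset Strict Implicit. Unset Printing Implicit Defensive.
Import Order.TTheory GRing.Theory Num.Theory.

Section GraphDefs.
Variables (T : finType) (e : rel T).

(* a walk from u to v with vertex sequence u :: p (length = size p) *)
Definition walk (u : T) (p : seq T) (v : T) : bool := path e u p && (last u p == v).

Definition shortest_walk (u : T) (p : seq T) (v : T) : Prop :=
  walk u p v /\ forall q, walk u q v -> size p <= size q.

Definition in_interval (u v x : T) : Prop :=
  exists p, shortest_walk u p v /\ x \in u :: p.

Definition simple_graph : Prop := symmetric e /\ irreflexive e.

Definition connected_graph : Prop := forall x y, exists p, walk x p y.

Definition connected_set (S : {set T}) : Prop :=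
  forall x y, x \in S -> y \in S -> exists p, walk x p y /\ all (mem S) p.

Definition has_K_minor (w : nat) : Prop :=
  exists B : 'I_w -> {set T},
    [/\ forall i, B i != set0,
        forall i, connected_set (B i),
        forall i j, i != j -> [disjoint B i & B j] &
        forall i j, i != j -> exists x y, [/\ x \in B i, y \in B j & e x y]].

Definition is_quadruple (U : {set T}) (Q : {set {set T}}) : bool :=
  [exists a : T, exists b : T, exists c : T, exists d : T,
     [&& a \in U, b \in U, c \in U, d \in U, uniq [:: a; b; c; d] &
         Q == [set [set a; b]; [set c; d]]]].

Definition good_quad (Q : {set {set T}}) : Prop :=
  exists a b c d x, [/\ Q = [set [set a; b]; [set c; d]],
                        in_interval a b x & in_interval c d x].

Definition quads (U : {set T}) : {set {set {set T}}} := [set Q | is_quadruple U Q].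
Definition good_quads (U : {set T}) : {set {set {set T}}} :=
  [set Q in quads U | `[< good_quad Q >]].

Definition q (U : {set T}) : nat := #|quads U|.
Definition q_good (U : {set T}) : nat := #|good_quads U|.

Definition epsU (U : {set T}) : rat := (q_good U)%:R / (8 * q U)%:R.

Definition good_participation (U : {set T}) (a : T) : nat :=
  #|[set Q in good_quads U | a \in cover Q]|.

Definition good_pairs_with (U : {set T}) (a b : T) : nat :=
  #|[set P : {set T} | [set [set a; b]; P] \in good_quads U]|.

Definition U_good (U : {set T}) (a : T) : Prop :=
  a \in U /\
  exists Ua : {set T},
    [/\ Ua \subset U,
        (Num.ceil (4 * epsU U * (#|U| - 1)%:R) <= #|Ua|%:Z)%R &
        forall b, b \in Ua ->
          (Num.ceil (4 * epsU U * ('C(#|U| - 2, 2))%:R) <= (good_pairs_with U a b)%:Z)%R].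

End GraphDefs.

(* Main.v *)
Require Import Defs.
From mathcomp Require Import all_boot all_order all_algebra.
From mathcomp Require Import zify ring lra.
Set Implicit Arguments. Unset Strict Implicit. Unset Printing Implicit Defensive.
Import Order.TTheory GRing.Theory Num.Theory.

Lemma card_ind (J : finType) (S : {set J}) : #|S| = \sum_y (y \in S : nat).
Proof. by rewrite -sum1_card big_mkcond /=; apply: eq_bigr => y _; case: (y \in S). Qed.

Lemma L1 (I J : finType) (S : {set J}) (A : {set I}) (F : I -> {set J}) :
  (forall y, y \in S -> exists2 i, i \in A & y \in F i) -> #|S| <= \sum_(i in A) #|F i|.
Proof.
move=> H.
have -> : \sum_(i in A) #|F i| = \sum_y \sum_(i in A) (y \in F i : nat).
  by rewrite exchange_big /=; apply: eq_bigr => i _; rewrite card_ind.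
rewrite card_ind; apply: leq_sum => y _.
case yS: (y \in S) => //; have [i iA yF] := H y yS.
by rewrite (bigD1 i) //= yF.
Qed.

Lemma L2 (I J : finType) (S : {set J}) (A : {set I}) (F : I -> {set J}) :
  (forall i, i \in A -> F i \subset S) ->
  (forall y i j, i \in A -> j \in A -> y \in F i -> y \in F j -> i = j) ->
  \sum_(i in A) #|F i| <= #|S|.
Proof.
move=> HS Hu.
have -> : \sum_(i in A) #|F i| = \sum_y \sum_(i in A) (y \in F i : nat).
  by rewrite exchange_big /=; apply: eq_bigr => i _; rewrite card_ind.
rewrite card_ind; apply: leq_sum => y _.
case: (boolP [exists i in A, y \in F i]) => [/exists_inP [i iA yF]|/exists_inP N].
  rewrite (bigD1 i) //= yF big1 ?addn0 ?((subsetP (HS i iA)) y yF) //.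
  move=> j /andP [jA ji]; case yj: (y \in F j) => //.
  by rewrite (Hu y i j iA jA yF yj) eqxx in ji.
rewrite big1 // => i iA; case yF: (y \in F i) => //; exfalso; apply: N; by exists i.
Qed.

Lemma L3 (I J : finType) (A : {set I}) (S : {set J}) (R : I -> J -> bool) :
  \sum_(x in A) #|[set y in S | R x y]| = \sum_(y in S) #|[set x in A | R x y]|.
Proof.
transitivity (\sum_x \sum_y ((x \in A) && (y \in S) && R x y : nat)).
  rewrite big_mkcond /=; apply: eq_bigr => x _; rewrite card_ind.
  case: (x \in A); last by rewrite big1.
  by apply: eq_bigr => y _; rewrite inE.
rewrite exchange_big [in RHS]big_mkcond /=; apply: eq_bigr => y _; rewrite card_ind.
case: (y \in S); last by rewrite big1 // => x _; rewrite andbF.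
by apply: eq_bigr => x _; rewrite inE andbT.
Qed.

Section Q.
Variable T : finType.
Implicit Types (U X Y A P : {set T}) (Q : {set {set T}}).

Lemma quadP U Q : Q \in quads U -> exists a b c d,
  [/\ uniq [:: a; b; c; d], [&& a \in U, b \in U, c \in U & d \in U] &
      Q = [set [set a; b]; [set c; d]]].
Proof.
rewrite inE => /existsP [a /existsP [b /existsP [c /existsP [d]]]].
case/and5P => aU bU cU dU /andP [un /eqP ->].
by exists a, b, c, d; split => //; rewrite aU bU cU dU.
Qed.

Lemma quadI U a b c d : uniq [:: a; b; c; d] -> a \in U -> b \in U -> c \in U -> d \in U ->
  [set [set a; b]; [set c; d]] \in quads U.
Proof.
move=> un aU bU cU dU; rewrite inE; apply/existsP; exists a; apply/existsP; exists b.
apply/existsP; exists c; apply/existsP; exists d; by rewrite aU bU cU dU un eqxx.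
Qed.

Lemma set2_eq A P X Y : X != Y -> [set A; P] = [set X; Y] ->
  (A = X /\ P = Y) \/ (A = Y /\ P = X).
Proof.
move=> XY E.
have hA : A \in [set X; Y] by rewrite -E !inE eqxx.
have hP : P \in [set X; Y] by rewrite -E !inE eqxx orbT.
have hX : X \in [set A; P] by rewrite E !inE eqxx.
have hY : Y \in [set A; P] by rewrite E !inE eqxx orbT.
move: hA hP hX hY; rewrite !inE.
case/orP => /eqP -> ; case/orP => /eqP ->.
- by rewrite !orbb => _ /eqP YX; rewrite YX eqxx in XY.
- by left.
- by right.
- by rewrite !orbb => /eqP XY'; rewrite XY' eqxx in XY.
Qed.

Lemma cover2 X Y : cover [set X; Y] = X :|: Y.
Proof.
apply/setP => x; apply/bigcupP/setUP => [[B]|[xX|xY]].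
- by rewrite !inE => /orP [] /eqP -> ; [left|right].
- by exists X; rewrite ?inE ?eqxx.
- by exists Y; rewrite ?inE ?eqxx ?orbT.
Qed.

Lemma quad_cover U Q : Q \in quads U -> #|U :&: cover Q| = 4.
Proof.
case/quadP => a [b [c [d [un /and4P [aU bU cU dU] ->]]]].
rewrite cover2.
have -> : U :&: ([set a; b] :|: [set c; d]) = [set a; b] :|: [set c; d].
  apply/setIidPr/subsetP => x; rewrite !inE => /orP [] /orP [] /eqP -> //.
rewrite cardsU !cards2.
have -> : [set a; b] :&: [set c; d] = set0.
  apply/setP => x; rewrite !inE; apply/negP => /andP [H1 H2].
  move: H2 un; rewrite /= !inE.
  by case/orP: H1 => /eqP ->; case/orP => /eqP ->; rewrite ?eqxx ?orbT ?andbF //; rewrite ?eqxx ?orbT ?andbF.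
move: un; rewrite /= !inE cards0.
by case/and4P => /norP [-> _] _ -> _.
Qed.

Lemma quad_split U A P x b : A = [set x; b] -> [set A; P] \in quads U ->
  [/\ x \in U, b \in U, x != b, P \subset U :\ x :\ b & #|P| == 2].
Proof.
move=> -> /quadP [a' [b' [c' [d' [un /and4P [aU bU cU dU] E]]]]].
move: (un); rewrite /= !inE => /and4P [/norP [ab /norP [ac ad]] /norP [bc bd] cd _].
have XY : [set a'; b'] != [set c'; d'].
  apply/eqP => /setP /(_ a'); rewrite !inE eqxx /=.
  by move=> /esym /orP [] /eqP E0; [rewrite E0 eqxx in ac | rewrite E0 eqxx in ad].
case: (set2_eq XY E) => [[E1 ->]|[E1 ->]].
- have xin : x \in [set a'; b'] by rewrite -E1 !inE eqxx.
  have bin : b \in [set a'; b'] by rewrite -E1 !inE eqxx orbT.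
  have xb : x != b.
    apply/negP => /eqP xb; move: (cards2 x b); rewrite E1 cards2 ab xb eqxx.
    done.
  move: xin bin; rewrite !inE => xin bin.
  split => //.
  + by case/orP: xin => /eqP ->.
  + by case/orP: bin => /eqP ->.
  + apply/subsetP => y; rewrite !inE => /orP [] /eqP ->;
    case/orP: xin => /eqP ->; case/orP: bin => /eqP ->;
    rewrite ?cU ?dU ?andbT; (repeat (apply/andP; split)) => //;
    by rewrite // eq_sym.
  + by rewrite cards2 cd.
- have xin : x \in [set c'; d'] by rewrite -E1 !inE eqxx.
  have bin : b \in [set c'; d'] by rewrite -E1 !inE eqxx orbT.
  have xb : x != b.
    apply/negP => /eqP xb; move: (cards2 x b); rewrite E1 cards2 cd xb eqxx.
    done.
  move: xin bin; rewrite !inE => xin bin.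
  split => //.
  + by case/orP: xin => /eqP ->.
  + by case/orP: bin => /eqP ->.
  + apply/subsetP => y; rewrite !inE => /orP [] /eqP ->;
    case/orP: xin => /eqP ->; case/orP: bin => /eqP ->;
    rewrite ?aU ?bU ?andbT; (repeat (apply/andP; split)) => //;
    by rewrite // eq_sym.
  + by rewrite cards2 ab.
Qed.
End Q.

Section P.
Variable T : finType.
Implicit Types (U X Y A P : {set T}) (Q : {set {set T}}) (S : {set {set {set T}}}).

Definition pwset S (x b : T) := [set P | [set [set x; b]; P] \in S].
Definition Fq S x b := [set [set [set x; b]; P] | P in pwset S x b].

Lemma cardD2 U x b : x \in U -> b \in U -> x != b -> #|U :\ x :\ b| = #|U| - 2.
Proof.
move=> xU bU xb; rewrite (cardsD1 x U) xU (cardsD1 b (U :\ x)) !inE eq_sym xb bU.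
by rewrite add1n add1n subn2.
Qed.

Lemma partA U S x : S \subset quads U ->
  #|[set Q in S | x \in cover Q]| <= \sum_(b in U :\ x) #|pwset S x b|.
Proof.
move=> SQ; apply: leq_trans (L1 (F := Fq S x) _) _; last first.
  by apply: leq_sum => b _; apply: leq_imset_card.
move=> y; rewrite inE => /andP [yS xc].
have /quadP [a [b [c [d [un /and4P [aU bU cU dU] E]]]]] := subsetP SQ y yS.
move: (un); rewrite /= !inE => /and4P [/norP [ab /norP [ac ad]] /norP [bc bd] cd _].
move: xc; rewrite E cover2 !inE -E => /orP [] /orP [] /eqP xe; subst x.
- exists b; first by rewrite !inE eq_sym ab bU.
  by apply/imsetP; exists [set c; d]; rewrite // inE -E.
- exists a; first by rewrite !inE ab aU.
  by apply/imsetP; exists [set c; d]; rewrite ?inE -?E // [[set b; a]]setUC -E.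
- exists d; first by rewrite !inE eq_sym cd dU.
  have E' : [set [set c; d]; [set a; b]] = y by rewrite E setUC.
  by apply/imsetP; exists [set a; b]; rewrite ?inE E' .
- exists c; first by rewrite !inE cd cU.
  have E' : [set [set d; c]; [set a; b]] = y by rewrite E setUC [[set d; c]]setUC.
  by apply/imsetP; exists [set a; b]; rewrite ?inE E' .
Qed.
Lemma pw_sub U S x b P : S \subset quads U -> P \in pwset S x b -> 
  [/\ x \in U, b \in U, x != b, P \subset U :\ x :\ b & #|P| == 2].
Proof. by move=> SQ; rewrite inE => /(subsetP SQ); apply: quad_split. Qed.

Lemma partB U S x : S \subset quads U ->
  \sum_(b in U :\ x) #|pwset S x b| <= #|[set Q in S | x \in cover Q]|.
Proof.
move=> SQ.
have nx : forall b P, P \in pwset S x b -> x \notin P.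
  move=> b P /(pw_sub SQ) [_ _ _ /subsetP sP _]; apply/negP => /sP; by rewrite !inE eqxx andbF.
have -> : \sum_(b in U :\ x) #|pwset S x b| = \sum_(b in U :\ x) #|Fq S x b|.
  apply: eq_bigr => b _; rewrite card_in_imset // => P P' HP HP' E.
  have : P \in [set [set x; b]; P'] by rewrite -E !inE eqxx orbT.
  rewrite !inE => /orP [/eqP EP|/eqP //].
  by move: (nx _ _ HP); rewrite EP !inE eqxx.
apply: L2.
  move=> b _; apply/subsetP => y /imsetP [P HP ->]; rewrite inE.
  by move: (HP); rewrite inE => ->; rewrite cover2 !inE eqxx.
move=> y b b' _ _ /imsetP [P HP ->] /imsetP [P' HP' E].
have XY : [set x; b'] != P'.
  by apply/negP => /eqP E0; move: (nx _ _ HP'); rewrite -E0 !inE eqxx.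
case: (set2_eq XY E) => [[E1 _]|[E1 _]].
  have : b \in [set x; b'] by rewrite -E1 !inE eqxx orbT.
  have [_ _ xb _ _] := pw_sub SQ HP.
  by rewrite !inE eq_sym (negbTE xb) => /eqP.
by move: (nx _ _ HP'); rewrite -E1 !inE eqxx.
Qed.

Lemma pwC U x b : x \in U -> b \in U -> x != b ->
  'C(#|U| - 2, 2) <= #|pwset (quads U) x b|.
Proof.
move=> xU bU xb; rewrite -(cardD2 xU bU xb) -cards_draws.
apply: subset_leq_card; apply/subsetP => P; rewrite !inE => /andP [sP /cards2P [c [d [cd EP]]]].
subst P.
have cin : c \in U :\ x :\ b by apply: (subsetP sP); rewrite !inE eqxx.
have din : d \in U :\ x :\ b by apply: (subsetP sP); rewrite !inE eqxx orbT.
move: cin din; rewrite !inE => /and3P [cb cx cU] /and3P [db dx dU].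
have H := @quadI T U x b c d _ xU bU cU dU; rewrite inE in H; apply: H.
by rewrite /= !inE !negb_or xb eq_sym cx eq_sym dx eq_sym cb eq_sym db cd.
Qed.

Lemma pwgC U S x b : S \subset quads U -> x \in U -> b \in U :\ x ->
  #|pwset S x b| <= 'C(#|U| - 2, 2).
Proof.
move=> SQ xU; rewrite !inE => /andP [bx bU].
rewrite -(cardD2 xU bU); last by rewrite eq_sym.
rewrite -cards_draws; apply: subset_leq_card; apply/subsetP => P HP.
by have [_ _ _ sP cP] := pw_sub SQ HP; rewrite inE sP cP.
Qed.
End P.

Lemma count4 (T : finType) (U : {set T}) (S : {set {set {set T}}}) :
  S \subset quads U ->
  \sum_(x in U) #|[set Q in S | x \in cover Q]| = 4 * #|S|.
Proof.
move=> SQ; rewrite (@L3 _ _ U S (fun x Q => x \in cover Q)) -sum1_card big_distrr /=.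
apply: eq_bigr => Q QS; rewrite muln1 -(quad_cover (subsetP SQ Q QS)).
by apply: eq_card => x; rewrite !inE.
Qed.

Lemma nat_part (T : finType) (e : rel T) (U : {set T}) a :
  4 <= #|U| -> a \in U ->
  (forall x, x \in U -> good_participation e U x <= good_participation e U a) ->
  [/\ #|U| * (#|U| - 1) * 'C(#|U| - 2, 2) <= 4 * q U,
      4 * q_good e U <= #|U| * good_participation e U a,
      good_participation e U a <= \sum_(b in U :\ a) good_pairs_with e U a b &
      forall b, b \in U :\ a -> good_pairs_with e U a b <= 'C(#|U| - 2, 2)].
Proof.
move=> n4 aU amax.
have GQ : good_quads e U \subset quads U by apply/subsetP => Q; rewrite inE => /andP [].
split.
- rewrite /q -(count4 (subxx (quads U))) -mulnA -sum_nat_const; apply: leq_sum => x xU.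
  apply: leq_trans (partB _ (subxx _)).
  have -> : #|U| - 1 = #|U :\ x| by rewrite (cardsD1 x U) xU add1n subn1.
  rewrite -sum_nat_const; apply: leq_sum => b.
  by rewrite !inE => /andP [bx bU]; apply: pwC; rewrite // eq_sym.
- rewrite /q_good -(count4 GQ) -sum_nat_const; apply: leq_sum => x xU.
  exact: amax.
- exact: partA.
- by move=> b bU; apply: pwgC.
Qed.


Theorem mainTheorem7 (T : finType) (e : rel T) (w : nat) (U : {set T}) :
  simple_graph e -> connected_graph e -> ~ has_K_minor e w ->
  (maxn w 4 <= #|U|)%N ->
  forall a, a \in U ->
    (forall x, x \in U -> (good_participation e U x <= good_participation e U a)%N) ->
    U_good e U a.
Proof.
move=> _ _ _ hw a aU amax.
have n4 : (4 <= #|U|)%N by apply: leq_trans hw; rewrite leq_maxr.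
have [F1 F2 F3 F4] := nat_part (e:=e) n4 aU amax.
split => //.
set n := #|U| in n4 F1 F2 F3 F4 *.
set C := 'C(n - 2, 2) in F1 F4 *.
set gp := good_pairs_with e U a in F3 F4 *.
set x := (4 * epsU e U)%R.
set Ua := [set b in U :\ a | (Num.ceil (x * C%:R) <= (gp b)%:Z)%R].
exists Ua; split.
- by apply/subsetP => b; rewrite !inE => /andP [/andP [_ ->]].
- have C0 : (0 < C)%N by rewrite bin_gt0; lia.
  set m := (n - 1)%N in F1 *.
  set qq := q U in F1.
  set qg := q_good e U in F2.
  set S := (\sum_(b in U :\ a) gp b)%N in F3.
  have hnat : (qg * m * C <= S * qq)%N.
    have h1 : (n * (qg * m * C) <= n * (S * qq))%N.
      apply: (@leq_trans (qg * (4 * qq))).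
        rewrite (_ : n * (qg * m * C) = qg * (n * m * C))%N; last ring.
        exact: leq_mul (leqnn qg) F1.
      rewrite (_ : qg * (4 * qq) = (4 * qg) * qq)%N; last ring.
      rewrite (_ : n * (S * qq) = (n * S) * qq)%N; last ring.
      apply: leq_mul (leqnn qq); apply: leq_trans F2 _; exact: leq_mul (leqnn n) F3.
    by rewrite leq_pmul2l in h1; lia.
  have qq0 : (0 < qq)%N.
    have : (0 < n * m * C)%N by rewrite !muln_gt0 C0; lia.
    move=> h; lia.
  have xE : (x * 2 * qq%:R = qg%:R :> rat)%R.
    rewrite /x /epsU -/qq -/qg natrM; field; rewrite pnatr_eq0; lia.
  have x0 : (0 <= x)%R by rewrite /x /epsU mulr_ge0 // divr_ge0.
  have hb : forall b, b \in U :\ a -> ((gp b)%:R <= (b \in Ua)%:R * C%:R + x * C%:R :> rat)%R.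
    move=> b bU; rewrite inE bU /=.
    case: (boolP (Num.ceil (x * C%:R) <= (gp b)%:Z)%R) => h /=.
      rewrite mul1r; apply: (@le_trans _ _ (C%:R)%R); first by rewrite ler_nat; exact: F4.
      by rewrite lerDl mulr_ge0.
    rewrite mul0r add0r; move: h; rewrite -ltNge ceil_gt_int.
    by rewrite -pmulrn; apply: ltW.
  have hS : ((S%:R : rat) <= #|Ua|%:R * C%:R + m%:R * (x * C%:R))%R.
    rewrite /S natr_sum; apply: le_trans (ler_sum _ hb) _.
    rewrite big_split /= -mulr_suml sumr_const.
    have -> : #|U :\ a| = m by rewrite /m /n (cardsD1 a U) aU add1n subn1.
    have -> : (\sum_(i in U :\ a) (i \in Ua)%:R = #|Ua|%:R :> rat)%R.
      rewrite -natr_sum; congr (_%:R)%R.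
      rewrite card_ind big_mkcond /=; apply: eq_bigr => b _.
      by case: (boolP (b \in U :\ a)) => // h; rewrite inE (negbTE h).
    by rewrite !mulr_natl.
  rewrite ceil_le_int -pmulrn.
  have qqR : (0 < qq%:R :> rat)%R by rewrite ltr0n.
  have CR : (0 < C%:R :> rat)%R by rewrite ltr0n.
  have h1 : ((x * 2 * m%:R * C%:R) * qq%:R <= S%:R * qq%:R :> rat)%R.
    rewrite (_ : (x * 2 * m%:R * C%:R) * qq%:R = (x * 2 * qq%:R) * m%:R * C%:R)%R; last by ring.
    by rewrite xE -!natrM ler_nat.
  rewrite ler_pM2r // in h1.
  have h2 : ((x * m%:R) * C%:R <= #|Ua|%:R * C%:R :> rat)%R.
    move: h1 hS; set y := (x * m%:R * C%:R)%R.
    rewrite (_ : (m%:R * (x * C%:R) = y)%R); last by rewrite /y; ring.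
    rewrite (_ : (x * 2 * m%:R * C%:R = 2 * y)%R); last by rewrite /y; ring.
    move=> ha hb'; lra.
  by rewrite ler_pM2r // in h2.
- by move=> b; rewrite !inE => /andP [_ ->].
Qed.
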